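(* Let $n\ge8$, $m\in\mathbb N$, $p\in(0,1)$, and let $\mathcal I=\{11,12,21,22\}$. For $i=1,2,3$, $$\|\bar g_{l_{i,1}}\ast_{l_{i,3}}^{l_{i,2}}\bar g_{l_{i,4}}\|_2^2=\sum_{I\subseteq\mathcal I}(-1)^{|I|}\pi(H_{i,I}),$$ where $(l_{1,1},l_{1,2},l_{1,3},l_{1,4})=(1,0,1,1)$, $(l_{2,1},l_{2,2},l_{2,3},l_{2,4})=(2,1,1,2)$, $(l_{3,1},l_{3,2},l_{3,3},l_{3,4})=(2,1,1,1)$; that is, $\|\bar g_1\ast_1^0\bar g_1\|_2^2$, $\|\bar g_2\ast_1^1\bar g_2\|_2^2$ and $\|\bar g_2\ast_1^1\bar g_1\|_2^2$ equal the corresponding sums for $i=1,2,3$ respectively.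
   Context: Random intersection graph $\mathcal G(n,m,p)$: vertices $v_1,\ldots,v_n$, attributes $a_1,\ldots,a_m$; each vertex chooses each attribute independently with probability $p$; two vertices are adjacent iff they chose a common attribute; $\hat p=1-(1-p^2)^m$. For a graph $H$ with vertices among $v_1,\ldots,v_n$, $\pi(H)=\mathbb P(H\subseteq\mathcal G(n,m,p))$ (depends only on the isomorphism type of $H$); $\pi$ of the graph with no vertices is $1$. $\mu_{m,p}(x)=p^{|x|}(1-p)^{m-|x|}$ on $\{0,1\}^m$; $g(x,y)=1$ if $x_i=y_i=1$ for some $i$, else $0$; $g_1(x)=\int g(x,y)\,d\mu_{m,p}(y)$; $\bar g_2=g-\hat p$, $\bar g_1=g_1-\hat p$; norms are $L^2$ with respect to products of $\mu_{m,p}$; contraction $f\ast_b^ah(x_1,..,x_{b-a},y_1,..,y_{k-b},z_1,..,z_{l-b})=\int f(w,x,y)h(w,x,z)\,d\mu_{m,p}^{\otimes a}(w)$ for $f$ on $(\{0,1\}^m)^k$, $h$ on $(\{0,1\}^m)^l$. Graphs with edges labelled by $\mathcal I$: $G_1$ is the star $K_{1,4}$ with centre $v$ and leaves $u_{11},u_{12},u_{21},u_{22}$, edges $e_{ab}=\{v,u_{ab}\}$; $G_2$ is the $4$-cycle on $x_1,x_2,y_1,y_2$ with edges $e_{ab}=\{x_a,y_b\}$; $G_3$ is the path on $z_{12},x_1,y,x_2,z_{22}$ with edges $e_{11}=\{x_1,y\}$, $e_{12}=\{x_1,z_{12}\}$, $e_{21}=\{x_2,y\}$, $e_{22}=\{x_2,z_{22}\}$.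 For $I\subseteq\mathcal I$, $G_{i,I}$ is the subgraph of $G_i$ induced by the edges $e_{ab}$, $ab\in I$. $H_{i,I}$ is a graph on $8$ vertices from $\{v_1,\ldots,v_n\}$ consisting of a copy of $G_{i,I}$, together with $4-|I|$ further pairwise vertex-disjoint edges (disjoint from $G_{i,I}$), and isolated vertices. *)

(* Defs.v *)
(* integrals w.r.t. the finite product measures are finite weighted sums. *)
From HB Require Import structures.
From mathcomp Require Import all_boot all_order all_algebra.
From mathcomp Require Import reals.
Set Implicit Arguments. Unset Strict Implicit. Unset Printing Implicit Defensive.
Import Order.TTheory GRing.Theory Num.Theory.
Local Open Scope ring_scope.

Definition cube (m : nat) := {ffun 'I_m -> bool}.
Definition cube0 (m : nat) : cube m := [ffun=> false].
Definition weight (m : nat) (x : cube m) : nat := #|[set i | x i]|.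

Section Defs.
Variables (R : realType) (m : nat) (p : R).

Definition mu (x : cube m) : R := p ^+ weight x * (1 - p) ^+ (m - weight x).

Definition adj (x y : cube m) : bool := [exists i, x i && y i].
Definition g (x y : cube m) : R := (adj x y)%:R.
Definition phat : R := 1 - (1 - p ^+ 2) ^+ m.
Definition g1 (x : cube m) : R := \sum_(y : cube m) g x y * mu y.
Definition gbar2 (x y : cube m) : R := g x y - phat.
Definition gbar1 (x : cube m) : R := g1 x - phat.

(* functions of several variables in {0,1}^m, represented on sequences of
   arguments (a function of k variables only looks at the first k entries) *)
Definition gbar (k : nat) : seq (cube m) -> R :=
  match k with
  | 1%N => fun s => gbar1 (nth (cube0 m) s 0)
  | _ => fun s => gbar2 (nth (cube0 m) s 0) (nth (cube0 m) s 1)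
  end.

Definition mu_prod (s : seq (cube m)) : R := \prod_(c <- s) mu c.

(* contraction f *_b^a h for f of k variables and h of l variables:
   (x_1..x_{b-a}, y_1..y_{k-b}, z_1..z_{l-b}) |->
      int f(w,x,y) h(w,x,z) dmu^{(x) a}(w) *)
Definition contr (a b k l : nat) (f h : seq (cube m) -> R) : seq (cube m) -> R :=
  fun v =>
    let x := take (b - a) v in
    let y := take (k - b) (drop (b - a) v) in
    let z := drop ((b - a) + (k - b)) v in
    \sum_(w : a.-tuple (cube m)) mu_prod w * f (w ++ x ++ y) * h (w ++ x ++ z).

Definition contr_arity (a b k l : nat) : nat := ((b - a) + (k - b) + (l - b))%N.

Definition L2sq (d : nat) (F : seq (cube m) -> R) : R :=
  \sum_(v : d.-tuple (cube m)) mu_prod v * F v ^+ 2.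
End Defs.

Record graph (n : nat) := Graph { gV : {set 'I_n}; gE : rel 'I_n }.

(* pi(H) = P(H subgraph of G(n,m,p)): the vertices choose attribute vectors
   X v independently with law mu; H subset G iff every edge of H joins two
   vertices sharing an attribute *)
Definition piH (R : realType) (n m : nat) (p : R) (H : graph n) : R :=
  \sum_(X : {ffun 'I_n -> cube m})
     (\prod_(v : 'I_n) mu p (X v)) *
     ([forall u, forall v, gE H u v ==> adj (X u) (X v)])%:R.

(* edge labels I = {11,12,21,22}; (a,b) : 'I_2 * 'I_2 stands for label (a+1)(b+1) *)
Definition label := ('I_2 * 'I_2)%type.

(* endpoints of the labelled edges e_ab of G_1, G_2, G_3 (i = 0,1,2);
   vertices encoded in 'I_5:
   G_1: v=0, u_ab = 1+2a+b ;  G_2: x_a = a, y_b = 2+b ;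
   G_3: x_a = a, y = 2, z_12 = 3, z_22 = 4 *)
Definition ends (i : 'I_3) (e : label) : 'I_5 * 'I_5 :=
  let a := nat_of_ord e.1 in let b := nat_of_ord e.2 in
  match nat_of_ord i with
  | 0%N => (inord 0, inord (1 + 2 * a + b))
  | 1%N => (inord a, inord (2 + b))
  | _ => (inord a, if b == 0%N then inord 2 else inord (3 + a))
  end.

Definition VG (i : 'I_3) (I : {set label}) : {set 'I_5} :=
  [set v | [exists e in I, (v == (ends i e).1) || (v == (ends i e).2)]].

Definition same_edge n (u v : 'I_n) (xy : 'I_n * 'I_n) : bool :=
  ((u == xy.1) && (v == xy.2)) || ((u == xy.2) && (v == xy.1)).

(* H is an H_{i,I}: a graph on 8 vertices of {v_1..v_n} consisting of a copy
   (via the injective phi) of G_{i,I}, together with 4-|I| further pairwise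
   vertex-disjoint edges psi e (indexed by the labels e not in I), disjoint
   from the copy of G_{i,I}, and isolated vertices *)
Definition isH (n : nat) (i : 'I_3) (I : {set label}) (H : graph n) : Prop :=
  exists (phi : 'I_5 -> 'I_n) (psi : label -> 'I_n * 'I_n),
  {in VG i I &, injective phi} /\
  (forall e, e \notin I -> (psi e).1 != (psi e).2) /\
  (forall e e', e \notin I -> e' \notin I -> e != e' ->
     [disjoint [set (psi e).1; (psi e).2] & [set (psi e').1; (psi e').2]]) /\
  (forall e v, e \notin I -> v \in VG i I ->
     (phi v != (psi e).1) && (phi v != (psi e).2)) /\
  (forall u v, gE H u v =
     [exists e in I, same_edge u v (phi (ends i e).1, phi (ends i e).2)]
     || [exists e in ~: I, same_edge u v (psi e)]) /\
  #|gV H| = 8%N /\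
  (phi @: VG i I \subset gV H) /\
  (forall e, e \notin I -> ((psi e).1 \in gV H) && ((psi e).2 \in gV H)).

(* (l_{i,1}, l_{i,2}, l_{i,3}, l_{i,4}) for i = 1,2,3 (encoded 0,1,2) *)
Definition lidx (i : 'I_3) : nat * nat * nat * nat :=
  match nat_of_ord i with
  | 0%N => (1, 0, 1, 1)
  | 1%N => (2, 1, 1, 2)
  | _ => (2, 1, 1, 1)
  end%N.

(* Main.v *)
Require Import Defs.
From HB Require Import structures.
From mathcomp Require Import all_boot all_order all_algebra.
From mathcomp Require Import reals.
From mathcomp Require Import zify ring.
Set Implicit Arguments. Unset Strict Implicit. Unset Printing Implicit Defensive.
Import Order.TTheory GRing.Theory Num.Theory.
Local Open Scope ring_scope.

Section Aux.
Variables (R : realType) (m : nat) (p : R).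
Local Notation T := (cube m).

Lemma muE (x : T) : mu p x = \prod_i (if x i then p else 1 - p).
Proof.
rewrite (bigID (fun i => x i)) /=.
rewrite (eq_bigr (fun _ => p)); last by move=> i ->.
rewrite [X in _ * X](eq_bigr (fun _ => 1 - p)); last by move=> i /negbTE ->.
have -> : \prod_(i | x i) p = \prod_(i in [set i | x i]) p.
  by apply: eq_bigl => i; rewrite inE.
have -> : \prod_(i | ~~ x i) (1 - p) = \prod_(i in ~: [set i | x i]) (1 - p).
  by apply: eq_bigl => i; rewrite !inE.
rewrite !prodr_const /mu /weight; congr (_ * _ ^+ _).
have h := cardsC [set i | x i]; rewrite card_ord in h; lia.
Qed.

Lemma sum_mu : \sum_(x : T) mu p x = 1.
Proof.
under eq_bigr do rewrite muE.
rewrite -(bigA_distr_bigA (fun (i : 'I_m) (b : bool) => if b then p else 1 - p)).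
apply: big1 => i _; rewrite big_bool /=; by rewrite addrC subrK.
Qed.

Definition W (I : finType) (X : {ffun I -> T}) := \prod_i mu p (X i).
Definition E (I : finType) (F : {ffun I -> T} -> R) := \sum_X W X * F X.
Definition upd (I : finType) (X : {ffun I -> T}) (u : I) (x : T) : {ffun I -> T} :=
  [ffun w => if w == u then x else X w].

Lemma sum_W (I : finType) : \sum_(X : {ffun I -> T}) W X = 1.
Proof.
rewrite /W -(bigA_distr_bigA (fun (i : I) (x : T) => mu p x)).
by apply: big1 => i _; rewrite sum_mu.
Qed.

Lemma E_const (I : finType) (c : R) : E (fun _ : {ffun I -> T} => c) = c.
Proof. by rewrite /E -big_distrl /= sum_W mul1r. Qed.

Lemma E_ext (I : finType) (F G : {ffun I -> T} -> R) :
  (forall X, F X = G X) -> E F = E G.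
Proof. by move=> h; apply: eq_bigr => X _; rewrite h. Qed.

Lemma updE (I : finType) (X : {ffun I -> T}) u x w :
  upd X u x w = if w == u then x else X w.
Proof. by rewrite /upd (ffunE (fun w => if w == u then x else X w)). Qed.

Lemma W_upd (I : finType) (X : {ffun I -> T}) u x :
  W X * mu p x = W (upd X u x) * mu p (X u).
Proof.
rewrite /W (bigD1 u) //= [in RHS](bigD1 u) //= updE eqxx.
rewrite [X in _ = _ * X * _](eq_bigr (fun i => mu p (X i))) /=; last first.
  by move=> i /negbTE hi; rewrite updE hi.
by ring.
Qed.

Lemma updK (I : finType) (X : {ffun I -> T}) u x : upd (upd X u x) u (X u) = X.
Proof. by apply/ffunP => w; rewrite !updE; case: eqP => // ->. Qed.

Lemma upd_at (I : finType) (X : {ffun I -> T}) u x : upd X u x u = x.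
Proof. by rewrite updE eqxx. Qed.

Lemma upd_neq (I : finType) (X : {ffun I -> T}) u x w : w != u -> upd X u x w = X w.
Proof. by move=> /negbTE h; rewrite updE h. Qed.

Lemma E_M (I : finType) (u : I) (F : {ffun I -> T} -> R) :
  E F = E (fun X => \sum_x mu p x * F (upd X u x)).
Proof.
rewrite /E.
transitivity (\sum_X \sum_(x : T) W X * mu p x * F X).
  by apply: eq_bigr => X _; rewrite -big_distrl /= -big_distrr /= sum_mu mulr1.
under [RHS]eq_bigr do rewrite big_distrr /=.
rewrite !pair_bigA /=.
pose h (q : {ffun I -> T} * T) := (upd q.1 u q.2, q.1 u).
have hK : involutive h by case=> X x; rewrite /h /= updK upd_at.
rewrite (reindex_inj (inv_inj hK)) /=.
apply: eq_bigr => -[X x] _ /=.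
by rewrite /h /= -(W_upd X u x) mulrA.
Qed.

Definition comp (I J : finType) (phi : I -> J) (X : {ffun J -> T}) : {ffun I -> T} :=
  [ffun i => X (phi i)].

Lemma compE (I J : finType) (phi : I -> J) (X : {ffun J -> T}) i : comp phi X i = X (phi i).
Proof. by rewrite /comp (ffunE (fun i => X (phi i))). Qed.

Lemma transfer_k (I J : finType) (phi : I -> J) (k : nat) : forall (S : {set I})
  (G : {ffun I -> T} -> R), #|S| = k -> {in S &, injective phi} ->
  (forall x y : {ffun I -> T}, (forall i, i \in S -> x i = y i) -> G x = G y) ->
  E (fun X => G (comp phi X)) = E G.
Proof.
elim: k => [|k IH] S G hS hinj hdep.
  move: hS => /cards0_eq hS0.
  pose c0 : {ffun I -> T} := [ffun=> cube0 m].
  have hc : forall x, G x = G c0 by move=> x; apply: hdep => i; rewrite hS0 inE.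
  by rewrite (E_ext (G := fun _ => G c0)) // (E_ext (F := G) (G := fun _ => G c0)) // !E_const.
have [s Ss] : exists s, s \in S.
  by apply/set0Pn; rewrite -card_gt0 hS.
have hS' : #|S :\ s| = k.
  by move: hS; rewrite (cardsD1 s) Ss => -[].
pose G' (y : {ffun I -> T}) := \sum_x mu p x * G (upd y s x).
rewrite (E_M (phi s)).
rewrite (E_ext (G := fun X => G' (comp phi X))); last first.
  move=> X; apply: eq_bigr => x _; congr (_ * _); apply: hdep => i Si.
  rewrite compE !updE compE.
  have -> : (phi i == phi s) = (i == s).
    apply/eqP/eqP => [|-> //]; exact: hinj.
  by [].
rewrite (IH (S :\ s) G' hS'); first by rewrite [RHS](E_M s).
- by move=> a b /setD1P[_ Sa] /setD1P[_ Sb]; exact: hinj.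
- move=> y y' hyy; apply: eq_bigr => x _; congr (_ * _); apply: hdep => i Si.
  rewrite !updE; case: eqP => // /eqP ne; apply: hyy.
  by rewrite !inE ne Si.
Qed.

Lemma transfer (I J : finType) (phi : I -> J) (S : {set I})
  (G : {ffun I -> T} -> R) : {in S &, injective phi} ->
  (forall x y : {ffun I -> T}, (forall i, i \in S -> x i = y i) -> G x = G y) ->
  E (fun X => G (comp phi X)) = E G.
Proof. exact: (@transfer_k I J phi #|S| S G erefl). Qed.

Lemma natr_forall (I : finType) (P : pred I) :
  ([forall i, P i])%:R = \prod_i (P i)%:R :> R.
Proof.
case: (boolP [forall i, P i]) => h.
  by move/forallP: h => h; rewrite big1 // => i _; rewrite h.
by move/forallPn: h => [i /negbTE hi]; rewrite (bigD1 i) //= hi mul0r.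
Qed.

Lemma nadjE (x y : T) :
  (~~ adj x y)%:R = \prod_i (~~ (x i && y i))%:R :> R.
Proof. by rewrite /adj negb_exists (natr_forall (fun i => ~~ (x i && y i))). Qed.

Lemma sum_nadj (x : T) :
  \sum_y mu p y * (~~ adj x y)%:R = \prod_i (if x i then 1 - p else 1).
Proof.
under [LHS]eq_bigr do rewrite muE nadjE.
rewrite (eq_bigr (fun y : T => \prod_i ((if y i then p else 1-p) * (~~ (x i && y i))%:R))); last first. move=> y _. rewrite big_split /=. reflexivity.
rewrite -(bigA_distr_bigA (fun i (b : bool) => (if b then p else 1-p) * (~~ (x i && b))%:R)).
apply: eq_bigr => i _; rewrite big_bool /=.
case: (x i) => /=; ring.
Qed.


Lemma Eg : \sum_(x : T) \sum_(y : T) mu p x * mu p y * g R x y = phat m p.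
Proof.
have h : forall x y : T, g R x y = 1 - (~~ adj x y)%:R.
  move=> x y; rewrite /g; case: (adj x y) => /=; ring.
transitivity (\sum_(x : T) mu p x * (1 - \sum_(y : T) mu p y * (~~ adj x y)%:R)).
  apply: eq_bigr => x _; rewrite -[in X in _ * (X - _)]sum_mu -sumrB big_distrr /=.
  by apply: eq_bigr => y _; rewrite h; ring.
under eq_bigr do rewrite mulrBr mulr1.
rewrite sumrB sum_mu /phat; congr (1 - _).
under [LHS]eq_bigr do rewrite sum_nadj muE.
rewrite (eq_bigr (fun x : T => \prod_i ((if x i then p else 1-p) * (if x i then 1 - p else 1)))); last first.
  move=> x _. rewrite big_split /=. reflexivity.
rewrite -(bigA_distr_bigA (fun i (b : bool) => (if b then p else 1-p) * (if b then 1 - p else 1))).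
rewrite (eq_bigr (fun _ => 1 - p ^+ 2)); last first.
  move=> i _; rewrite big_bool /=; ring.
by rewrite prodr_const card_ord.
Qed.

Definition indep (I : finType) (F : {ffun I -> T} -> R) (u : I) :=
  forall X x, F (upd X u x) = F X.

Lemma E_scale (I : finType) (c : R) (F : {ffun I -> T} -> R) :
  E (fun X => c * F X) = c * E F.
Proof.
rewrite /E big_distrr /=; apply: eq_bigr => X _; ring.
Qed.

Lemma E_C2 (I : finType) (u v : I) (F : {ffun I -> T} -> R) :
  u != v -> indep F u -> indep F v ->
  E (fun X => g R (X u) (X v) * F X) = phat m p * E F.
Proof.
move=> uv hu hv.
rewrite (E_M u) (E_ext (G := fun X => (\sum_(x : T) mu p x * g R x (X v)) * F X)); last first.
  move=> X; rewrite big_distrl /=; apply: eq_bigr => x _.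
  rewrite upd_at upd_neq 1?eq_sym // hu; ring.
rewrite (E_M v) (E_ext (G := fun X => (\sum_(x : T) \sum_(y : T) mu p x * mu p y * g R x y) * F X)); last first.
  move=> X; rewrite exchange_big /= [RHS]big_distrl /=; apply: eq_bigr => y _.
  rewrite upd_at hv mulrA [in LHS]big_distrr /= [in LHS]big_distrl /=.
  rewrite [in RHS]big_distrl /=; apply: eq_bigr => x _; ring.
by rewrite E_scale Eg.
Qed.

Lemma peel_k (I L : finType) (psi : L -> I * I) (k : nat) : forall (J : {set L})
  (A : {ffun I -> T} -> R), #|J| = k ->
  (forall e, e \in J -> (psi e).1 != (psi e).2) ->
  (forall e e', e \in J -> e' \in J -> e != e' ->
     [disjoint [set (psi e).1; (psi e).2] & [set (psi e').1; (psi e').2]]) ->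
  (forall e, e \in J -> indep A (psi e).1 /\ indep A (psi e).2) ->
  E (fun X => A X * \prod_(e in J) g R (X (psi e).1) (X (psi e).2))
  = phat m p ^+ k * E A.
Proof.
elim: k => [|k IH] J A hJ hne hdis hA.
  move: hJ => /cards0_eq ->.
  rewrite expr0 mul1r; apply: E_ext => X; rewrite big_set0 mulr1; reflexivity.
have [e Je] : exists e, e \in J.
  by apply/set0Pn; rewrite -card_gt0 hJ.
have hJ' : #|J :\ e| = k.
  by move: hJ; rewrite (cardsD1 e) Je => -[].
have hfar : forall e' u, e' \in J :\ e -> u \in [set (psi e).1; (psi e).2] ->
    ((psi e').1 != u) && ((psi e').2 != u).
  move=> e' u /setD1P[ne' Je'] hu.
  have hd := hdis e e' Je Je'.
  have nee : e != e' by rewrite eq_sym.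
  move: (disjointFr (hd nee) hu) => /negbT; rewrite !inE negb_or => /andP[h1 h2].
  by rewrite eq_sym h1 /= eq_sym h2.
pose F X := A X * \prod_(e' in J :\ e) g R (X (psi e').1) (X (psi e').2).
rewrite (E_ext (G := fun X => g R (X (psi e).1) (X (psi e).2) * F X)); last first.
  move=> X; rewrite /F (big_setD1 e) //=; ring.
have hindF : forall u, u \in [set (psi e).1; (psi e).2] -> indep A u -> indep F u.
  move=> u hu hAu X x; rewrite /F hAu; congr (_ * _); apply: eq_bigr => e' He'.
  have /andP[h1 h2] := hfar e' u He' hu.
  by rewrite !upd_neq.
rewrite E_C2; last first.
- by apply: hindF; [rewrite !inE eqxx orbT | case: (hA e Je)].
- by apply: hindF; [rewrite !inE eqxx | case: (hA e Je)].
- exact: hne.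
rewrite /F (IH (J :\ e)) //.
- by rewrite exprS mulrA.
- by move=> e' /setD1P[_ ?]; apply: hne.
- by move=> e1 e2 /setD1P[_ ?] /setD1P[_ ?]; apply: hdis.
- by move=> e' /setD1P[_ ?]; apply: hA.
Qed.

Lemma natr_forall_in (L : finType) (A : {set L}) (P : pred L) :
  ([forall e in A, P e])%:R = \prod_(e in A) (P e)%:R :> R.
Proof.
case: (boolP [forall e in A, P e]) => h.
  rewrite big1 // => e he; move/forallP: h => /(_ e); rewrite he /= => ->.
  reflexivity.
move/forallPn: h => [e]; rewrite negb_imply => /andP[he /negbTE hP].
by rewrite (bigD1 e) //= hP mul0r.
Qed.

Lemma adjC (x y : T) : adj x y = adj y x.
Proof. by apply: eq_existsb => i; rewrite andbC. Qed.

Lemma E_sum (I J : finType) (F : J -> {ffun I -> T} -> R) :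
  E (fun X => \sum_j F j X) = \sum_j E (F j).
Proof.
rewrite /E; under eq_bigr do rewrite big_distrr /=.
by rewrite exchange_big.
Qed.

Lemma E_int (I : finType) (u : I) (F G : {ffun I -> T} -> R) :
  (forall X, \sum_x mu p x * F (upd X u x) = G X) -> E F = E G.
Proof. by move=> h; rewrite (E_M u); apply: E_ext. Qed.

Lemma sign_compl (A : {set label}) : (-1) ^+ #|A| = (-1) ^+ #|~: A| :> R.
Proof.
rewrite -signr_odd -[RHS]signr_odd; congr (_ ^+ _).
have := cardsC A; rewrite card_prod !card_ord => h.
have := oddD #|A| #|~: A|; rewrite h /=.
by case: (odd #|A|); case: (odd #|~: A|).
Qed.

Lemma expand_label (a : label -> R) (c : R) :
  \prod_(e : label) (a e - c) =
  \sum_(A : {set label}) (-1) ^+ #|A| * c ^+ #|~: A| * \prod_(e in A) a e.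
Proof.
rewrite (bigA_distr _ _ a (fun _ => - c)).
apply: eq_bigr => A _.
rewrite (bigID (fun e => e \in A)) /=.
rewrite (eq_bigr a); last by move=> e ->.
rewrite [X in _ * X](eq_bigr (fun _ => - c)); last by move=> e /negbTE ->.
have -> : \prod_(i | ~~ (i \in A)) (- c) = \prod_(i in ~: A) (- c).
  by apply: eq_bigl => e; rewrite inE.
rewrite prodr_const (exprNn c) (sign_compl A) [LHS]mulrC. reflexivity.
Qed.

Lemma piH_key (n : nat) (i : 'I_3) (I : {set label}) (H : graph n) :
  isH i I H ->
  piH m p H = phat m p ^+ #|~: I| *
    E (fun y : {ffun 'I_5 -> T} => \prod_(e in I) g R (y (ends i e).1) (y (ends i e).2)).
Proof.
case=> phi [psi [hinj [hne [hdis [hfar [hE _]]]]]].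
have ind : forall X : {ffun 'I_n -> T},
  [forall u, forall v, gE H u v ==> adj (X u) (X v)] =
  [forall e in I, adj (X (phi (ends i e).1)) (X (phi (ends i e).2))] &&
  [forall e in ~: I, adj (X (psi e).1) (X (psi e).2)].
  move=> X; apply/idP/idP.
  - move=> /forallP h; apply/andP; split; apply/forallP => e; apply/implyP => he.
    + move: (forallP (h (phi (ends i e).1)) (phi (ends i e).2)) => /implyP; apply.
      rewrite hE; apply/orP; left; apply/existsP; exists e.
      by rewrite he /same_edge !eqxx.
    + move: (forallP (h (psi e).1) (psi e).2) => /implyP; apply.
      rewrite hE; apply/orP; right; apply/existsP; exists e.
      by rewrite he /same_edge !eqxx.
  - move=> /andP[/forallP h1 /forallP h2]; apply/forallP => u; apply/forallP => v.
    apply/implyP; rewrite hE => /orP[/existsP[e /andP[he hs]] | /existsP[e /andP[he hs]]].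
    + have := implyP (h1 e) he.
      by case/orP: hs => /andP[/eqP-> /eqP->] //; rewrite adjC.
    + have := implyP (h2 e) he.
      by case/orP: hs => /andP[/eqP-> /eqP->] //; rewrite adjC.
pose A (X : {ffun 'I_n -> T}) :=
  \prod_(e in I) g R (X (phi (ends i e).1)) (X (phi (ends i e).2)).
have -> : piH m p H =
   E (fun X => A X * \prod_(e in ~: I) g R (X (psi e).1) (X (psi e).2)).
  apply: eq_bigr => X _; congr (_ * _); rewrite ind -mulnb natrM.
  rewrite (natr_forall_in I (fun e => adj (X (phi (ends i e).1)) (X (phi (ends i e).2)))).
  rewrite (natr_forall_in (~: I) (fun e => adj (X (psi e).1) (X (psi e).2))).
  reflexivity.
have VGin : forall e, e \in I -> ((ends i e).1 \in VG i I) && ((ends i e).2 \in VG i I).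
  move=> e he; rewrite !inE; apply/andP; split; apply/existsP; exists e;
  by rewrite he eqxx ?orbT.
rewrite (peel_k (psi := psi) (J := ~: I) (A := A) erefl).
- congr (_ * _).
  rewrite (E_ext (G := fun X => (fun y : {ffun 'I_5 -> T} =>
     \prod_(e in I) g R (y (ends i e).1) (y (ends i e).2)) (comp phi X))); last first.
    by move=> X; rewrite /A; apply: eq_bigr => e _; rewrite !compE.
  apply: (transfer (S := VG i I)) => // x y hxy.
  apply: eq_bigr => e he; have /andP[h1 h2] := VGin e he.
  by rewrite !hxy.
- by move=> e; rewrite inE; apply: hne.
- by move=> e e'; rewrite !inE; apply: hdis.
- move=> e; rewrite inE => he; split=> X x; apply: eq_bigr => e' he';
  have /andP[h1 h2] := VGin e' he';
  have /andP[k1 k2] := hfar e _ he h1; have /andP[k3 k4] := hfar e _ he h2;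
  by rewrite !upd_neq.
Qed.

Lemma rhs_key (n : nat) (i : 'I_3) (H : {set label} -> graph n) :
  (forall I, isH i I (H I)) ->
  \sum_(I : {set label}) (-1) ^+ #|I| * piH m p (H I) =
  E (fun y : {ffun 'I_5 -> T} =>
        \prod_(e : label) (g R (y (ends i e).1) (y (ends i e).2) - phat m p)).
Proof.
move=> hH.
rewrite (E_ext (G := fun y => \sum_(A : {set label}) (-1) ^+ #|A| * phat m p ^+ #|~: A| *
   \prod_(e in A) g R (y (ends i e).1) (y (ends i e).2))); last first.
  by move=> y; rewrite expand_label.
rewrite E_sum; apply: eq_bigr => A _.
rewrite (piH_key (hH A)).
under [RHS]E_ext do rewrite -mulrA.
rewrite E_scale E_scale. reflexivity.
Qed.

Lemma big_tuple0 (F : 0.-tuple T -> R) : \sum_(t : 0.-tuple T) F t = F [tuple].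
Proof. by rewrite (big_pred1 [tuple]) // => t /=; apply/esym/eqP; exact: tuple0. Qed.

Lemma big_tupleS (k : nat) (F : k.+1.-tuple T -> R) :
  \sum_(t : k.+1.-tuple T) F t = \sum_(x : T) \sum_(t : k.-tuple T) F [tuple of x :: t].
Proof.
rewrite pair_bigA /=.
rewrite (reindex (fun q : T * k.-tuple T => [tuple of q.1 :: q.2])) /=.
  by apply: eq_bigr => -[x t].
exists (fun t : k.+1.-tuple T => (thead t, [tuple of behead t])).
  by move=> [x t] _ /=; congr pair; apply: val_inj.
move=> t _; apply: val_inj => /=.
by case: t => -[|x s] //.
Qed.

End Aux.
Section Cases.
Variables (R : realType) (m : nat) (p : R).
Local Notation T := (cube m).
Local Notation gb x y := (g R x y - phat m p).
Definition vv (k : nat) : 'I_5 := inord k.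

Lemma vv_ne (a b : nat) : (a < 5)%N -> (b < 5)%N -> a != b -> vv a != vv b.
Proof. move=> ha hb; apply: contra => /eqP/(congr1 (@nat_of_ord 5)); rewrite /vv !inordK // => ->; exact: eqxx. Qed.

Lemma mu_prod0 : mu_prod p ([::] : seq T) = 1.
Proof. by rewrite /mu_prod big_nil. Qed.

Lemma mu_prodS (x : T) s : mu_prod p (x :: s) = mu p x * mu_prod p s.
Proof. by rewrite /mu_prod big_cons. Qed.

Lemma sum_gb (x : T) : \sum_(y : T) mu p y * gb x y = gbar1 p x.
Proof.
rewrite /gbar1 /g1; under eq_bigr do rewrite mulrBr.
rewrite sumrB -big_distrl /= sum_mu mul1r; congr (_ - _).
by apply: eq_bigr => y _; rewrite mulrC.
Qed.

Lemma prod_labelR (F : label -> R) :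
  \prod_(e : label) F e = F (ord0, ord0) * F (ord0, ord_max) * F (ord_max, ord0) * F (ord_max, ord_max).
Proof.
transitivity (\prod_(a : 'I_2) \prod_(b : 'I_2) F (a, b)).
  by rewrite pair_bigA; apply: eq_bigr => -[a b].
rewrite !big_ord_recl !big_ord0 /= !mulr1.
have -> : lift ord0 ord0 = ord_max :> 'I_2 by apply/val_inj.
by rewrite !mulrA.
Qed.

Lemma E_star (I : finType) (u w : I) (K : {ffun I -> T} -> R) :
  u != w -> indep K u ->
  E p (fun X => gb (X w) (X u) * K X) = E p (fun X => gbar1 p (X w) * K X).
Proof.
move=> uw hK; apply: (E_int (u := u)) => X.
rewrite -sum_gb big_distrl /=; apply: eq_bigr => x _.
rewrite upd_at upd_neq 1?eq_sym // hK; ring.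
Qed.

Lemma E_last (I : finType) (u : I) (h : T -> R) :
  E p (fun X => h (X u)) = \sum_(x : T) mu p x * h x.
Proof.
rewrite (E_int (u := u) (G := fun _ => \sum_(x : T) mu p x * h x)) ?E_const //.
by move=> X; apply: eq_bigr => x _; rewrite upd_at.
Qed.

Lemma case0 : L2sq p (contr_arity 0 1 1 1) (contr p 0 1 1 1 (fun s : seq T => gbar1 p (nth (cube0 m) s 0))
       (fun s : seq T => gbar1 p (nth (cube0 m) s 0))) =
  E p (fun y : {ffun 'I_5 -> T} =>
     \prod_(e : label) (g R (y (inord 0)) (y (inord (1 + 2 * e.1 + e.2))) - phat m p)).
Proof.
rewrite /L2sq big_tupleS.
under eq_bigr do rewrite big_tuple0 /contr big_tuple0 /= mu_prodS !mu_prod0.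
rewrite (E_ext p (G := fun y : {ffun 'I_5 -> T} => gb (y (vv 0)) (y (vv 1)) *
   (gb (y (vv 0)) (y (vv 2)) * gb (y (vv 0)) (y (vv 3)) * gb (y (vv 0)) (y (vv 4))))); last first.
  move=> y; rewrite prod_labelR !mulrA; reflexivity.
rewrite E_star; [|by apply: vv_ne|by move=> X x /=; rewrite !upd_neq //; apply: vv_ne].
rewrite (E_ext p (G := fun y : {ffun 'I_5 -> T} => gb (y (vv 0)) (y (vv 2)) *
   (gbar1 p (y (vv 0)) * gb (y (vv 0)) (y (vv 3)) * gb (y (vv 0)) (y (vv 4))))); last first.
  move=> y; ring.
rewrite E_star; [|by apply: vv_ne|by move=> X x /=; rewrite !upd_neq //; apply: vv_ne].
rewrite (E_ext p (G := fun y : {ffun 'I_5 -> T} => gb (y (vv 0)) (y (vv 3)) *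
   (gbar1 p (y (vv 0)) * gbar1 p (y (vv 0)) * gb (y (vv 0)) (y (vv 4))))); last first.
  move=> y; ring.
rewrite E_star; [|by apply: vv_ne|by move=> X x /=; rewrite !upd_neq //; apply: vv_ne].
rewrite (E_ext p (G := fun y : {ffun 'I_5 -> T} => gb (y (vv 0)) (y (vv 4)) *
   (gbar1 p (y (vv 0)) * gbar1 p (y (vv 0)) * gbar1 p (y (vv 0))))); last first.
  move=> y; ring.
rewrite E_star; [|by apply: vv_ne|by move=> X x /=; rewrite !upd_neq //; apply: vv_ne].
rewrite (E_last (vv 0) (fun x => gbar1 p x * (gbar1 p x * gbar1 p x * gbar1 p x))).
apply: eq_bigr => x _; ring.
Qed.

Lemma E_last2 (I : finType) (u v : I) (h : T -> T -> R) : u != v ->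
  E p (fun X => h (X u) (X v)) = \sum_(x : T) mu p x * \sum_(y : T) mu p y * h x y.
Proof.
move=> uv.
rewrite (E_int (u := v) (G := fun X => \sum_(y : T) mu p y * h (X u) y)).
  exact: (E_last u (fun x => \sum_(y : T) mu p y * h x y)).
by move=> X; apply: eq_bigr => y _; rewrite upd_at upd_neq.
Qed.

Lemma case1 : L2sq p (contr_arity 1 1 2 2)
   (contr p 1 1 2 2
      (fun s : seq T => gbar2 p (nth (cube0 m) s 0) (nth (cube0 m) s 1))
      (fun s : seq T => gbar2 p (nth (cube0 m) s 0) (nth (cube0 m) s 1))) =
  E p (fun y : {ffun 'I_5 -> T} =>
    \prod_(e : label) (g R (y (inord e.1)) (y (inord (2 + e.2))) - phat m p)).
Proof.
pose c (s t : T) := \sum_(w : T) mu p w * (gb w s * gb w t).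
rewrite (E_ext p (G := fun y : {ffun 'I_5 -> T} => gb (y (vv 0)) (y (vv 2)) * gb (y (vv 0)) (y (vv 3)) *
   gb (y (vv 1)) (y (vv 2)) * gb (y (vv 1)) (y (vv 3)))); last first.
  move=> y; rewrite prod_labelR; reflexivity.
rewrite (E_int (u := vv 0) (G := fun y : {ffun 'I_5 -> T} => c (y (vv 2)) (y (vv 3)) *
   (gb (y (vv 1)) (y (vv 2)) * gb (y (vv 1)) (y (vv 3))))); last first.
  move=> X; rewrite /c big_distrl /=; apply: eq_bigr => x _.
  rewrite upd_at !upd_neq; [ring| by apply: vv_ne ..].
rewrite (E_int (u := vv 1) (G := fun y : {ffun 'I_5 -> T} => c (y (vv 2)) (y (vv 3)) *
   c (y (vv 2)) (y (vv 3)))); last first.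
  move=> X; rewrite [X in _ = _ * X]/c big_distrr /=; apply: eq_bigr => x _.
  rewrite upd_at !upd_neq; [ring| by apply: vv_ne ..].
rewrite (E_last2 (fun s t => c s t * c s t)); last by apply: vv_ne.
rewrite /L2sq big_tupleS; apply: eq_bigr => s _.
rewrite big_tupleS big_distrr /=; apply: eq_bigr => t _.
rewrite big_tuple0 /contr big_tupleS /=.
under eq_bigr do rewrite big_tuple0 /= mu_prodS mu_prod0.
rewrite !mu_prodS mu_prod0.
have -> : \sum_(w : T) mu p w * 1 * gbar2 p w s * gbar2 p w t = c s t.
  by apply: eq_bigr => w _; rewrite /gbar2; ring.
ring.
Qed.

Lemma case2 : L2sq p (contr_arity 1 1 2 1)
   (contr p 1 1 2 1
      (fun s : seq T => gbar2 p (nth (cube0 m) s 0) (nth (cube0 m) s 1))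
      (fun s : seq T => gbar1 p (nth (cube0 m) s 0))) =
  E p (fun y : {ffun 'I_5 -> T} =>
    \prod_(e : label)
       (g R (y (inord e.1))
          (y (if nat_of_ord e.2 == 0%N then inord 2 else inord (3 + e.1))) - phat m p)).
Proof.
pose d (s : T) := \sum_(w : T) mu p w * (gb w s * gbar1 p w).
rewrite (E_ext p (G := fun y : {ffun 'I_5 -> T} => gb (y (vv 0)) (y (vv 3)) *
   (gb (y (vv 0)) (y (vv 2)) * gb (y (vv 1)) (y (vv 2)) * gb (y (vv 1)) (y (vv 4))))); last first.
  move=> y; rewrite prod_labelR.
  have -> : forall a b c d : R, a * b * c * d = b * (a * c * d) by move=> *; ring.
  reflexivity.
rewrite E_star; [|by apply: vv_ne|by move=> X x /=; rewrite !upd_neq //; apply: vv_ne].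
rewrite (E_ext p (G := fun y : {ffun 'I_5 -> T} => gb (y (vv 1)) (y (vv 4)) *
   (gbar1 p (y (vv 0)) * gb (y (vv 0)) (y (vv 2)) * gb (y (vv 1)) (y (vv 2))))); last first.
  move=> y; ring.
rewrite E_star; [|by apply: vv_ne|by move=> X x /=; rewrite !upd_neq //; apply: vv_ne].
rewrite (E_int (u := vv 0) (G := fun y : {ffun 'I_5 -> T} => d (y (vv 2)) *
   (gb (y (vv 1)) (y (vv 2)) * gbar1 p (y (vv 1))))); last first.
  move=> X; rewrite /d big_distrl /=; apply: eq_bigr => x _.
  rewrite upd_at !upd_neq; [ring| by apply: vv_ne ..].
rewrite (E_int (u := vv 1) (G := fun y : {ffun 'I_5 -> T} => d (y (vv 2)) * d (y (vv 2)))); last first.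
  move=> X; rewrite [X in _ = _ * X]/d big_distrr /=; apply: eq_bigr => x _.
  rewrite upd_at !upd_neq; [ring| by apply: vv_ne ..].
rewrite (E_last (vv 2) (fun s => d s * d s)).
rewrite /L2sq big_tupleS; apply: eq_bigr => s _.
rewrite big_tuple0 /contr big_tupleS /=.
under eq_bigr do rewrite big_tuple0 /= mu_prodS mu_prod0.
rewrite !mu_prodS mu_prod0.
have -> : \sum_(w : T) mu p w * 1 * gbar2 p w s * gbar1 p w = d s.
  by apply: eq_bigr => w _; rewrite /gbar2; ring.
ring.
Qed.
End Cases.

Unset Implicit Arguments.

Theorem lemma6p2 (R : realType) (n m : nat) (p : R) :
  (8 <= n)%N -> 0 < p < 1 ->
  forall (i : 'I_3) (H : {set label} -> graph n),
  (forall I : {set label}, isH i I (H I)) ->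
  let '(l1, l2, l3, l4) := lidx i in
  @L2sq R m p (contr_arity l2 l3 l1 l4)
       (contr p l2 l3 l1 l4 (gbar p l1) (gbar p l4))
  = \sum_(I : {set label}) (-1) ^+ #|I| * piH m p (H I).
Proof.
move=> _ _ i H hH.
have := @rhs_key R m p n i H hH.
case: i hH => [[|[|[|k]]] hi] hH //= ->.
- exact: case0.
- exact: case1.
- exact: case2.
Qed.
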